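(* Suppose the following statement (A) holds: for all positive integers $n,r$, every simple edge-coloured graph $G$ with $n$ vertices and $n$ colours, in which each colour class has size at least $r$, contains a cycle $C$ of length at most $\lceil n/r\rceil$ such that no two edges of $C$ that share a vertex have the same colour. Then the following statement (B) holds: for all positive integers $n,r$, every simple digraph with $n$ vertices and minimum outdegree at least $r$ contains a directed cycle of length at most $\lceil n/r\rceil$.
   Context: Graphs may have parallel edges. An edge-coloured graph is simple if no colour class contains two parallel edges. A colour class is the set of edges receiving a given colour. A digraph is simple if for all vertices $u,v$ there is at most one arc from $u$ to $v$. *)

(* Defs.v *)
From mathcomp Require Import all_boot.
Set Implicit Arguments. Unset Strict Implicit. Unset Printing Implicit Defensive.

(* ceil (n / r) for r > 0 *)
Definition ceil_div (n r : nat) : nat := (n + r - 1) %/ r.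

(* A multigraph on vertex type V with finite edge type E: each edge e has
   endpoints ends e (an unordered pair, stored as an ordered pair). *)
Section ECGraph.
Variables (V E C : finType) (ends : E -> V * V) (col : E -> C).

Definition loopless := forall e, (ends e).1 != (ends e).2.

Definition joins (e : E) (u v : V) : bool :=
  ((ends e).1 == u) && ((ends e).2 == v) || ((ends e).1 == v) && ((ends e).2 == u).

Definition is_end (v : V) (e : E) : bool := ((ends e).1 == v) || ((ends e).2 == v).

Definition parallel (e f : E) : bool := joins f (ends e).1 (ends e).2.

Definition simple_ecol :=
  forall e f, e != f -> col e = col f -> ~~ parallel e f.

Definition colour_class (c : C) : {set E} := [set e | col e == c].

Definition is_cycle (k : nat) (vs : 'I_k -> V) (es : 'I_k -> E) :=
  2 <= k /\ injective vs /\ injective es /\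
  forall i : 'I_k, joins (es i) (vs i) (vs (ordS i)).

Definition properly_coloured (k : nat) (es : 'I_k -> E) :=
  forall i j : 'I_k, i != j -> (exists v, is_end v (es i) && is_end v (es j)) ->
    col (es i) != col (es j).
End ECGraph.

(* A simple digraph on V is a relation a : rel V (at most one arc u -> v),
   loopless (irreflexive). *)
Definition outdeg (V : finType) (a : rel V) (x : V) : nat := #|[set y | a x y]|.

Definition is_dicycle (V : finType) (a : rel V) (k : nat) (vs : 'I_k -> V) :=
  0 < k /\ injective vs /\ forall i : 'I_k, a (vs i) (vs (ordS i)).

Definition statementA : Prop :=
  forall (n r : nat), 0 < n -> 0 < r ->
  forall (E : finType) (ends : E -> 'I_n * 'I_n) (col : E -> 'I_n),
    loopless ends -> simple_ecol ends col ->
    (forall c : 'I_n, r <= #|colour_class col c|) ->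
    exists (k : nat) (vs : 'I_k -> 'I_n) (es : 'I_k -> E),
      [/\ is_cycle ends vs es, k <= ceil_div n r & properly_coloured ends col es].

Definition statementB : Prop :=
  forall (n r : nat), 0 < n -> 0 < r ->
  forall (a : rel 'I_n), irreflexive a ->
    (forall x : 'I_n, r <= outdeg a x) ->
    exists (k : nat) (vs : 'I_k -> 'I_n),
      @is_dicycle _ a k vs /\ k <= ceil_div n r.

(* Main.v *)
Require Import Defs.
From mathcomp Require Import all_boot.
From mathcomp Require Import zify.
Set Implicit Arguments. Unset Strict Implicit. Unset Printing Implicit Defensive.

Lemma valordS k (i : 'I_k) : nat_of_ord (ordS i) = i.+1 %% k.
Proof. by []. Qed.

Lemma ordS_neq k (i : 'I_k) : 2 <= k -> ordS i != i.
Proof.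
move=> hk; apply/eqP => /(congr1 (@nat_of_ord k)); rewrite valordS.
have := ltn_ord i; case: (ltngtP i.+1 k) => h _.
- rewrite modn_small //; lia.
- lia.
- rewrite h modnn; lia.
Qed.

Lemma iter_ordS k (i0 : 'I_k) m :
  nat_of_ord (iter m (@ordS k) i0) = (i0 + m) %% k.
Proof.
elim: m => [|m IH] /=; first by rewrite addn0 modn_small.
by rewrite IH addnS -addn1 modnDml addn1.
Qed.

Lemma all_from k (P : 'I_k -> Prop) (i0 : 'I_k) :
  (forall i, P i -> P (ordS i)) -> P i0 -> forall j, P j.
Proof.
move=> step h0 j.
have -> : j = iter (j + k - i0) (@ordS k) i0.
  apply/ord_inj; rewrite iter_ordS.
  have hi := ltn_ord i0; have hj := ltn_ord j.
  have -> : i0 + (j + k - i0) = j + k by lia.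
  by rewrite modnDr modn_small.
elim: (j + k - i0) => //= m IH; exact: step.
Qed.

Lemma rev_ordS k (i : 'I_k) : ordS (rev_ord (ordS i)) = rev_ord i.
Proof.
apply/ord_inj => /=.
have hi := ltn_ord i.
case: (ltngtP i.+1 k) => h.
- rewrite (modn_small h).
  have -> : (k - i.+2).+1 = k - i.+1 by lia.
  rewrite modn_small //; lia.
- lia.
- rewrite h modnn subn1 prednK; last lia.
  rewrite modnn; lia.
Qed.

Theorem mainTheorem1 : statementA -> statementB.
Proof.
move=> hA n r hn hr a airr hdeg.
pose E := {p : 'I_n * 'I_n | a p.1 p.2}.
pose ends := fun e : E => val e.
pose col := fun e : E => (val e).1.
have loopl : loopless ends.
  move=> [[x y] /= hxy]; rewrite /ends /=; apply/eqP => exy.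
  by move: hxy; rewrite exy airr.
have simp : simple_ecol ends col.
  move=> [[x y] hxy] [[x' y'] hxy'] /= hne; rewrite /col /= => exx.
  rewrite /parallel /joins /ends /=.
  apply/negP => /orP [/andP [/eqP e1 /eqP e2] | /andP [/eqP e1 /eqP e2]].
  - subst x' y'; by rewrite (bool_irrelevance hxy' hxy) eqxx in hne.
  - by have := hxy; rewrite exx e1 airr.
have hcol : forall c : 'I_n, r <= #|colour_class col c|.
  move=> c; apply: (leq_trans (hdeg c)); rewrite /outdeg.
  apply: (leq_trans _ (leq_imset_card (fun e : E => (val e).2) _)).
  apply: subset_leq_card; apply/subsetP => y; rewrite inE => hy.
  apply/imsetP; exists (exist _ (c, y) hy) => //.
  by rewrite inE /col /=.
have [k [vs [es [[hk [vinj [einj hj]]] hkle hpc]]]] := hA n r hn hr E ends col loopl simp hcol.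
pose fw := fun i : 'I_k => (val (es i)).1 = vs i /\ (val (es i)).2 = vs (ordS i).
pose bw := fun i : 'I_k => (val (es i)).1 = vs (ordS i) /\ (val (es i)).2 = vs i.
have fb : forall i, fw i \/ bw i.
  move=> i; move: (hj i); rewrite /joins /ends.
  by case/orP => /andP [/eqP h1 /eqP h2]; [left | right].
have arc : forall i, a (val (es i)).1 (val (es i)).2 by move=> i; exact: (valP (es i)).
have step : forall i, bw i -> bw (ordS i).
  move=> i [b1 b2].
  have hne : i != ordS i by rewrite eq_sym ordS_neq.
  have := hpc i (ordS i) hne.
  have [[f1 f2]|//] := fb (ordS i).
  have -> : col (es i) = col (es (ordS i)) by rewrite /col b1 f1.
  rewrite eqxx => H; suff: false by []; apply: H.
  exists (vs (ordS i)); rewrite /is_end /ends b1 f1 !eqxx //.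
case: (boolP [exists i, (val (es i)).1 == vs (ordS i)]).
- case/existsP => i0 /eqP h0.
  have b0 : bw i0.
    case: (fb i0) => // [[f1 f2]]; exfalso.
    move: (ordS_neq i0 hk); rewrite -(inj_eq vinj) -h0 f1 eqxx //.
  have ball := all_from step b0.
  exists k, (fun i => vs (rev_ord i)); split => //; split; first lia.
  split; first by move=> x y /vinj /rev_ord_inj.
  move=> i; have [b1 b2] := ball (rev_ord (ordS i)).
  by move: (arc (rev_ord (ordS i))); rewrite b1 b2 rev_ordS.
- rewrite negb_exists => /forallP hf.
  exists k, vs; split => //; split; first lia; split => // i.
  have [[f1 f2]|[b1 _]] := fb i.
  + by move: (arc i); rewrite f1 f2.
  + by move: (hf i); rewrite b1 eqxx.
Qed.
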